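(* Fix $\upsilon\in(0,1]$ and let $\rho(\upsilon)=\lim_{p\to\infty,\ p\text{ prime}}\rho(\upsilon,p)$ (this limit exists). For each $N\ge 2$ let $\rho_2(\upsilon,N)=\min\{\Lambda_3(S): S\subseteq\mathbb{Z}_N,\ |S|\ge \upsilon N\}$. Then $\lim_{p\to\infty,\ p\text{ prime}}\rho_2(\upsilon,p)=\rho(\upsilon)$.
   Context: For an integer $N\ge 2$ and $f:\mathbb{Z}_N\to\mathbb{C}$, define $\mathbb{E}(f)=\frac1N\sum_{n\in\mathbb{Z}_N} f(n)$ and $\Lambda_3(f)=\frac{1}{N^2}\sum_{n,d\in\mathbb{Z}_N} f(n)f(n+d)f(n+2d)$. A set $S\subseteq\mathbb{Z}_N$ is identified with its indicator function, so $\Lambda_3(S)$ is $N^{-2}$ times the number of pairs $(n,d)\in\mathbb{Z}_N^2$ with $n,n+d,n+2d\in S$. For $\upsilon\in(0,1]$, $\rho(\upsilon,N)=\min\{\Lambda_3(f): f:\mathbb{Z}_N\to[0,1],\ \mathbb{E}(f)\ge\upsilon\}$. *)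

(* Defs.v *)
From HB Require Import structures.
From mathcomp Require Import all_boot all_order all_algebra.
From mathcomp Require Import classical_sets reals.
Set Implicit Arguments. Unset Strict Implicit. Unset Printing Implicit Defensive.
Import Order.TTheory GRing.Theory Num.Theory.
Local Open Scope ring_scope.
Local Open Scope classical_set_scope.

(* Z_N is modelled by 'Z_N, which is the genuine cyclic ring Z/NZ for N >= 2
   (the only case used: N prime). *)

Definition avgZ (R : realType) (N : nat) (f : 'Z_N -> R) : R :=
  N%:R^-1 * \sum_(n : 'Z_N) f n.

Definition Lambda3 (R : realType) (N : nat) (f : 'Z_N -> R) : R :=
  (N%:R ^+ 2)^-1 *
  \sum_(n : 'Z_N) \sum_(d : 'Z_N) f n * f (n + d) * f (n + d + d).

Definition indic (R : realType) (N : nat) (S : {set 'Z_N}) : 'Z_N -> R :=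
  fun x => (x \in S)%:R.

(* rho(upsilon, N) = min { Lambda3 f : f : Z_N -> [0,1], E(f) >= upsilon }
   (the minimum is attained by compactness; we take the infimum). *)
Definition rho (R : realType) (u : R) (N : nat) : R :=
  inf [set x : R | exists f : 'Z_N -> R,
         (forall n, 0 <= f n <= 1) /\ u <= avgZ f /\ x = Lambda3 f].

Definition rho2 (R : realType) (u : R) (N : nat) : R :=
  inf [set x : R | exists S : {set 'Z_N},
         u * N%:R <= #|S|%:R /\ x = Lambda3 (indic R S)].

Definition prime_limit (R : realType) (a : nat -> R) (L : R) : Prop :=
  forall eps : R, 0 < eps ->
    exists P : nat, forall p : nat, prime p -> (P <= p)%N -> `|a p - L| < eps.

(* Main.v *)
Require Import Defs.
From HB Require Import structures.
From mathcomp Require Import all_boot all_order all_algebra.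
From mathcomp Require Import classical_sets reals.
From mathcomp Require Import ring lra.
Import Order.TTheory GRing.Theory Num.Theory.
Local Open Scope ring_scope.

Lemma term_concave (R : realType) (x y z a b c lo hi : R) :
  0 <= x -> 0 <= y -> 0 <= z -> a * b <= 0 -> a * c <= 0 -> b * c <= 0 ->
  lo <= 0 -> 0 <= hi ->
  hi * ((x + lo * a) * (y + lo * b) * (z + lo * c))
  - lo * ((x + hi * a) * (y + hi * b) * (z + hi * c)) <= (hi - lo) * (x * y * z).
Proof.
move=> x0 y0 z0 ab ac bc lo0 hi0.
have E0 : a * b * c = 0.
  have : (a * b * c) ^+ 2 <= 0.
    have -> : (a * b * c) ^+ 2 = (a * b) * ((a * c) * (b * c)) by ring.
    by rewrite mulr_le0_ge0 // mulr_le0.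
  move=> h; have : (a * b * c) ^+ 2 == 0 by rewrite eq_le h sqr_ge0.
  by rewrite sqrf_eq0 => /eqP.
have -> : hi * ((x + lo * a) * (y + lo * b) * (z + lo * c))
  - lo * ((x + hi * a) * (y + hi * b) * (z + hi * c)) =
  (hi - lo) * (x * y * z) - hi * lo * (hi - lo) * (x * (b * c) + y * (a * c) + z * (a * b))
  + hi * lo * (lo - hi) * (hi + lo) * (a * b * c) by ring.
rewrite E0 mulr0 addr0 lerBlDr lerDl.
apply: mulr_le0.
  by apply: mulr_le0_ge0; [apply: mulr_ge0_le0|lra].
have := mulr_ge0_le0 x0 bc; have := mulr_ge0_le0 y0 ac; have := mulr_ge0_le0 z0 ab; lra.
Qed.
Lemma twod (p : nat) (pp : prime p) (p3 : (2 < p)%N) (d : 'Z_p) : d != 0 -> d + d != 0.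
Proof.
move=> dn0; apply/eqP => /(congr1 val) /= h.
have hd : (0 < nat_of_ord d)%N by rewrite lt0n; apply: contra dn0 => /eqP h'; apply/eqP/val_inj.
have hdp : (nat_of_ord d < (Zp_trunc p).+2)%N by exact: ltn_ord.
move: h hd hdp; move: (nat_of_ord d) => k.
rewrite (Zp_cast (ltnW p3)) => /eqP h hd hdp.
move: h; rewrite -/(dvdn p (k + k)%N) addnn -mul2n Euclid_dvdM //.
case/orP => /dvdn_leq.
  by move=> /(_ isT); rewrite leqNgt p3.
by move=> /(_ hd); rewrite leqNgt hdp.
Qed.

Section Pipage.
Variables (R : realType) (p : nat).
Hypotheses (pp : prime p) (p3 : (2 < p)%N).
Local Notation Z := 'Z_p.

Definition Phi (f : Z -> R) : R :=
  \sum_(n : Z) \sum_(d : Z | d != 0) f n * f (n + d) * f (n + d + d).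
Definition delta (i j m : Z) : R := (m == i)%:R - (m == j)%:R.
Definition upd (f : Z -> R) i j t : Z -> R := fun m => f m + t * delta i j m.

Lemma distinct3 (n d : Z) : d != 0 ->
  [/\ n != n + d, n != n + d + d & n + d != n + d + d].
Proof.
move=> dn0; split.
- by apply: contra dn0 => /eqP; rewrite -{1}[n]addr0 => /addrI <-.
- move: (@twod p pp p3 d dn0); apply: contra => /eqP.
  by rewrite -{1}[n]addr0 -addrA => /addrI <-.
- by apply: contra dn0 => /eqP; rewrite -{1}[n + d]addr0 => /addrI <-.
Qed.

Lemma delta_mul i j a b : i != j -> a != b -> delta i j a * delta i j b <= 0.
Proof.
move=> ij ab; rewrite /delta.
case Hai: (a == i); case Hbi: (b == i); case Haj: (a == j); case Hbj: (b == j);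
  rewrite /= ?mulr1n ?mulr0n.
all: first [ lra | by rewrite (eqP Hai) (eqP Hbi) eqxx in ab
  | by rewrite (eqP Haj) (eqP Hbj) eqxx in ab
  | by rewrite -(eqP Hai) (eqP Haj) eqxx in ij
  | by rewrite -(eqP Hbi) (eqP Hbj) eqxx in ij ].
Qed.

Lemma Phi_concave f i j lo hi : (forall m, 0 <= f m) -> i != j -> lo <= 0 -> 0 <= hi ->
  hi * Phi (upd f i j lo) - lo * Phi (upd f i j hi) <= (hi - lo) * Phi f.
Proof.
move=> f0 ij lo0 hi0; rewrite /Phi !mulr_sumr -sumrB; apply: ler_sum => n _.
rewrite !mulr_sumr -sumrB; apply: ler_sum => d dn0.
have [h1 h2 h3] := distinct3 n d dn0.
by apply: term_concave => //; apply: delta_mul.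
Qed.

Definition frac (f : Z -> R) : {set Z} := [set m | (0 < f m) && (f m < 1)].
Definition unit01 (f : Z -> R) := forall m, 0 <= f m <= 1.

Lemma updE f i j t m : i != j ->
  upd f i j t m = if m == i then f i + t else if m == j then f j - t else f m.
Proof.
move=> ij; rewrite /upd /delta.
have [->|mi] := eqVneq m i; first by rewrite (negbTE ij) /=; lra.
have [->|mj] := eqVneq m j; first by rewrite /=; lra.
by rewrite /=; lra.
Qed.

Lemma sum_upd f i j t : \sum_m upd f i j t m = \sum_m f m.
Proof.
rewrite /upd big_split /= -mulr_sumr /delta sumrB.
have E k : \sum_(m : Z) (m == k)%:R = 1 :> R.
  by rewrite (bigD1 k) //= eqxx big1 ?addr0 // => m /negbTE ->.
by rewrite !E subrr mulr0 addr0.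
Qed.

Lemma step f i j t : unit01 f -> i != j -> i \in frac f -> j \in frac f ->
  0 <= f i + t <= 1 -> 0 <= f j - t <= 1 ->
  [\/ f i + t = 0, f j - t = 1, f i + t = 1 | f j - t = 0] ->
  unit01 (upd f i j t) /\ (#|frac (upd f i j t)| < #|frac f|)%N.
Proof.
move=> f01 ij fi fj hi hj hend; split.
  move=> m; rewrite updE //.
  by case: ifP => // _; case: ifP.
apply: proper_card; apply/properP; split.
  apply/fintype.subsetP => m; rewrite !inE updE //.
  case: ifP => [/eqP -> _ | _]; first by rewrite inE in fi.
  case: ifP => [/eqP -> _ | _ //]; first by rewrite inE in fj.
case: hend => e.
- exists i => //; rewrite inE updE // eqxx e; lra.
- exists j => //; rewrite inE updE // eqxx eq_sym (negbTE ij) e; lra.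
- exists i => //; rewrite inE updE // eqxx e; lra.
- exists j => //; rewrite inE updE // eqxx eq_sym (negbTE ij) e; lra.
Qed.

Lemma pipage k : forall f, (#|frac f| <= k)%N -> unit01 f ->
  exists g, [/\ unit01 g, (#|frac g| <= 1)%N, \sum_m g m = \sum_m f m & Phi g <= Phi f].
Proof.
elim: k => [|k IH] f hk f01.
  by exists f; split => //; apply: leq_trans hk _.
have [h1|] := leqP #|frac f| 1; first by exists f.
case/card_gt1P => i [j [fi fj ij]].
have := fi; have := fj; rewrite !inE => /andP [fj0 fj1] /andP [fi0 fi1].
have [lo [lo1 lo2 lo3 lo4]] : exists lo, [/\ - f i <= lo, f j - 1 <= lo, lo <= 0
    & lo = - f i \/ lo = f j - 1].
  have [h|h] := lerP (- f i) (f j - 1).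
    by exists (f j - 1); split; first [lra | by left; lra | by right; lra].
  by exists (- f i); split; first [lra | by left; lra | by right; lra].
have [hi [hi1 hi2 hi3 hi4]] : exists hi, [/\ 0 < hi, hi <= 1 - f i, hi <= f j
    & hi = 1 - f i \/ hi = f j].
  have [h|h] := lerP (1 - f i) (f j).
    by exists (1 - f i); split; first [lra | by left; lra | by right; lra].
  by exists (f j); split; first [lra | by left; lra | by right; lra].
have [ulo clo] : unit01 (upd f i j lo) /\ (#|frac (upd f i j lo)| < #|frac f|)%N.
  apply: step => //; try lra.
  by case: lo4 => ->; [apply: Or41 | apply: Or42]; lra.
have [uhi chi] : unit01 (upd f i j hi) /\ (#|frac (upd f i j hi)| < #|frac f|)%N.
  apply: step => //; try lra.
  by case: hi4 => ->; [apply: Or43 | apply: Or44]; lra.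
have f0 : forall m, 0 <= f m by move=> m; case/andP: (f01 m).
have cc := @Phi_concave f i j lo hi f0 ij lo3 (ltW hi1).
have [le1|lt1] := lerP (Phi (upd f i j lo)) (Phi f).
  have [g [g1 g2 g3 g4]] := IH (upd f i j lo) (leq_trans (ltnSE (leq_trans clo hk)) (leqnn _)) ulo.
  exists g; split => //; first by rewrite g3 sum_upd.
  exact: le_trans g4 le1.
have le2 : Phi (upd f i j hi) <= Phi f.
  rewrite leNgt; apply/negP => lt2.
  have : hi * Phi f < hi * Phi (upd f i j lo) by rewrite ltr_pM2l.
  have : - lo * Phi f <= - lo * Phi (upd f i j hi).
    by rewrite ler_wpM2l ?ltW //; lra.
  lra.
have [g [g1 g2 g3 g4]] := IH (upd f i j hi) (ltnSE (leq_trans chi hk)) uhi.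
exists g; split => //; first by rewrite g3 sum_upd.
exact: le_trans g4 le2.
Qed.

Lemma cardZ : #|{: Z}| = p.
Proof. by rewrite card_ord Zp_cast // ltnW. Qed.

Lemma sum_indic (A : {set Z}) : \sum_(m : Z) (m \in A)%:R = #|A|%:R :> R.
Proof.
rewrite (eq_bigr (fun m => if m \in A then 1 else 0)); last by move=> m _; case: (m \in A).
by rewrite -big_mkcond /= sumr_const.
Qed.

Lemma sum_const_Z (c : R) : \sum_(m : Z) c = p%:R * c.
Proof. by rewrite sumr_const cardZ mulr_natl. Qed.

Lemma Lambda3_split (f : Z -> R) :
  Lambda3 f = (p%:R ^+ 2)^-1 * (\sum_n f n * f n * f n + Phi f).
Proof.
rewrite /Lambda3 /Phi -big_split /=; congr (_ * _); apply: eq_bigr => n _.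
by rewrite (bigD1 0) //= !addr0.
Qed.

Lemma prod_diff (x y z x' y' z' : R) :
  0 <= x' <= x -> x <= 1 -> 0 <= y' <= y -> y <= 1 -> 0 <= z' <= z -> z <= 1 ->
  x * y * z - x' * y' * z' <= (x - x') + (y - y') + (z - z').
Proof.
move=> /andP[x0 xx] x1 /andP[y0 yy] y1 /andP[z0 zz] z1.
have -> : x * y * z - x' * y' * z' =
  (x - x') * (y * z) + (y - y') * (x' * z) + (z - z') * (x' * y') by ring.
have h1 : (x - x') * (y * z) <= x - x'.
  by rewrite ler_piMr ?subr_ge0 // mulr_ile1 //; lra.
have h2 : (y - y') * (x' * z) <= y - y'.
  by rewrite ler_piMr ?subr_ge0 // mulr_ile1 //; lra.
have h3 : (z - z') * (x' * y') <= z - z'.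
  by rewrite ler_piMr ?subr_ge0 // mulr_ile1 //; lra.
lra.
Qed.

Lemma round (g : Z -> R) : unit01 g -> (#|frac g| <= 1)%N ->
  let S := [set m | 0 < g m] in
  \sum_m g m <= #|S|%:R /\ Phi (indic R S) <= Phi g + 3%:R * p%:R.
Proof.
move=> g01 gf S.
have gh m : g m <= indic R S m.
  rewrite /indic inE; case: ltP => //= h; first by case/andP: (g01 m).
have h01 m : 0 <= indic R S m <= 1 by rewrite /indic; case: (m \in S) => /=; lra.
have hd m : indic R S m - g m <= (m \in frac g)%:R.
  rewrite /indic !inE; have /andP[g0 g1] := g01 m.
  have [h1|h1] := ltrP 0 (g m); have [h2|h2] := ltrP (g m) 1; rewrite /=; lra.
split.
  rewrite -sum_indic; apply: ler_sum => m _; exact: gh.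
set D := fun m => (m \in frac g)%:R : R.
have D0 m : 0 <= D m by rewrite /D; case: (_ \in _) => /=; lra.
have SD : \sum_m D m <= 1 by rewrite /D sum_indic lern1.
have key : Phi (indic R S) - Phi g <=
    \sum_(n : Z) \sum_(d : Z) (D n + D (n + d) + D (n + d + d)).
  rewrite /Phi -sumrB; apply: ler_sum => n _.
  rewrite -sumrB.
  have E : \sum_(d | d != 0) (indic R S n * indic R S (n + d) * indic R S (n + d + d)
     - g n * g (n + d) * g (n + d + d)) <= \sum_(d | d != 0) (D n + D (n + d) + D (n + d + d)).
    apply: ler_sum => d _; apply: (le_trans (prod_diff _ _ _ _ _ _ _ _ _ _ _ _)).
    - by rewrite (gh n) andbT; case/andP: (g01 n).
    - by case/andP: (h01 n).
    - by rewrite (gh (n + d)) andbT; case/andP: (g01 (n + d)).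
    - by case/andP: (h01 (n + d)).
    - by rewrite (gh (n + d + d)) andbT; case/andP: (g01 (n + d + d)).
    - by case/andP: (h01 (n + d + d)).
    by apply: lerD; [apply: lerD|]; apply: hd.
  apply: le_trans E _.
  rewrite [X in _ <= X](bigD1 0) //= lerDr.
  by rewrite !addr0 addr_ge0 ?addr_ge0.
have e1 : \sum_(n : Z) \sum_(d : Z) D n = p%:R * \sum_m D m.
  by rewrite mulr_sumr; apply: eq_bigr => n _; rewrite sum_const_Z.
have e2 : \sum_(n : Z) \sum_(d : Z) D (n + d) = p%:R * \sum_m D m.
  rewrite -sum_const_Z; apply: eq_bigr => n _.
  by rewrite [RHS](reindex_inj (addrI n)).
have e3 : \sum_(n : Z) \sum_(d : Z) D (n + d + d) = p%:R * \sum_m D m.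
  rewrite exchange_big /= -sum_const_Z; apply: eq_bigr => d _.
  rewrite [RHS](reindex_inj (addIr (d + d))) /=.
  by apply: eq_bigr => n _; rewrite addrA.
have es : \sum_(n : Z) \sum_(d : Z) (D n + D (n + d) + D (n + d + d)) =
  \sum_(n : Z) \sum_(d : Z) D n + \sum_(n : Z) \sum_(d : Z) D (n + d)
  + \sum_(n : Z) \sum_(d : Z) D (n + d + d).
  by rewrite -!big_split; apply: eq_bigr => n _; rewrite -!big_split.
move: key; rewrite es e1 e2 e3 => key.
have : p%:R * \sum_m D m <= p%:R :> R by rewrite ler_piMr.
lra.
Qed.

Lemma approx (u : R) (f : Z -> R) : unit01 f -> u <= avgZ f ->
  exists S : {set Z}, u * p%:R <= #|S|%:R /\
    Lambda3 (indic R S) <= Lambda3 f + 4%:R / p%:R.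
Proof.
move=> f01 hu.
have [g [g1 g2 g3 g4]] := @pipage #|frac f| f (leqnn _) f01.
have [h1 h2] := @round g g1 g2.
set S := [set m | 0 < g m] in h1 h2.
have pp0 : 0 < p%:R :> R by rewrite ltr0n prime_gt0.
exists S; split.
  move: hu; rewrite /avgZ ler_pdivlMl // => hu.
  by rewrite mulrC; apply: le_trans hu _; rewrite -g3.
rewrite !Lambda3_split.
have dh : \sum_n indic R S n * indic R S n * indic R S n <= p%:R.
  rewrite -[p%:R]mulr1 -sum_const_Z; apply: ler_sum => n _.
  by rewrite /indic; case: (n \in S) => /=; lra.
have df : 0 <= \sum_n f n * f n * f n.
  by apply: sumr_ge0 => n _; have /andP[f0 _] := f01 n; rewrite !mulr_ge0.
have key : \sum_n indic R S n * indic R S n * indic R S n + Phi (indic R S)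
   <= (\sum_n f n * f n * f n + Phi f) + 4%:R * p%:R by lra.
have c0 : 0 <= (p%:R ^+ 2 : R)^-1 by rewrite invr_ge0 exprn_ge0 // ltW.
apply: le_trans (ler_wpM2l c0 key) _.
rewrite mulrDr lerD2l.
have pn0 : p%:R != 0 :> R by rewrite gt_eqF.
by rewrite le_eqVlt; apply/orP; left; apply/eqP; field.
Qed.
End Pipage.

Theorem mainTheorem2 (R : realType) (u : R) (hu0 : 0 < u) (hu1 : u <= 1)
  (rhoU : R) (hlim : prime_limit (fun p => rho u p) rhoU) :
  prime_limit (fun p => rho2 u p) rhoU.
Proof.
move=> eps he.
have he2 : 0 < eps / 2 by rewrite divr_gt0.
have [P hP] := hlim _ he2.
set M := (Num.truncn (8%:R / eps)).+1.
exists (maxn (maxn P 3) M) => p pp.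
rewrite !geq_max => /andP[/andP[hPp h3] hM].
have p3 : (2 < p)%N by [].
have pp0 : 0 < p%:R :> R by rewrite ltr0n prime_gt0.
have hpM : 8%:R / eps < p%:R :> R.
  apply: lt_le_trans (truncnS_gt _) _; by rewrite ler_nat.
have h4 : 4%:R / p%:R < eps / 2 :> R.
  rewrite ltr_pdivrMr // mulrAC ltr_pdivlMr //.
  move: hpM; rewrite ltr_pdivrMr // => h; lra.
have := hP p pp hPp; rewrite ltr_norml => /andP[r1 r2].
pose A1 := [set x : R | exists f : 'Z_p -> R,
         (forall n, 0 <= f n <= 1) /\ u <= avgZ f /\ x = Lambda3 f]%classic.
pose A2 := [set x : R | exists S : {set 'Z_p},
         u * p%:R <= #|S|%:R /\ x = Lambda3 (indic R S)]%classic.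
have L0 (f : 'Z_p -> R) : (forall n, 0 <= f n) -> 0 <= Lambda3 f.
  move=> f0; rewrite /Lambda3; apply: mulr_ge0.
    by rewrite invr_ge0 exprn_ge0 // ltW.
  by apply: sumr_ge0 => n _; apply: sumr_ge0 => d _; rewrite !mulr_ge0.
have A1lb : has_lbound A1.
  by exists 0; move=> x [f [f01 [_ ->]]]; apply: L0 => n; case/andP: (f01 n).
have A2lb : has_lbound A2.
  by exists 0; move=> x [S [_ ->]]; apply: L0 => n; rewrite /indic; case: (_ \in _).
have A1ne : nonempty A1.
  exists (Lambda3 (fun _ : 'Z_p => 1 : R)), (fun _ => 1); split; first by move=> n; rewrite lexx ler01.
  split => //; rewrite /avgZ sum_const_Z // mulr1 mulVf ?gt_eqF //.
have A2ne : nonempty A2.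
  exists (Lambda3 (indic R [set: 'Z_p])), [set: 'Z_p]; split => //.
  by rewrite cardsT cardZ // ler_piMl // ltW.
have lo : rho u p <= rho2 u p.
  apply: lb_le_inf => // x [S [hS ->]].
  apply: (ge_inf A1lb); exists (indic R S); split.
    by move=> n; rewrite /indic; case: (_ \in _) => /=; lra.
  split => //; rewrite /avgZ sum_indic ler_pdivlMl // mulrC //.
have up : rho2 u p - 4%:R / p%:R <= rho u p.
  apply: lb_le_inf => // x [f [f01 [hf ->]]].
  have [S [hS hL]] := @approx R p pp p3 u f f01 hf.
  rewrite lerBlDr; apply: le_trans hL.
  by apply: (ge_inf A2lb); exists S.
rewrite ltr_norml; apply/andP; split.
  rewrite /=; rewrite /= in r1; lra.
rewrite /=; rewrite /= in r2; lra.
Qed.
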